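(* For every $\Gamma\in F(L)$, $\operatorname{div}(u_\Gamma)=\operatorname{tr}(g-g^* )$, where $g=\partial^L_x(\partial_y(\Gamma))$ and $g\mapsto g^*$ is the linear map of $A$ reversing the order of letters in each monomial and multiplying each letter by $-1$ (i.e. $(a_1\cdots a_n)^*=(-1)^na_n\cdots a_1$).
   Context: $A=\mathbb{R}\langle x,y\rangle$; $L\subset A$ the free Lie algebra on $x,y$. $\operatorname{tr}$ is the projection $A\to A/\operatorname{span}\{ab-ba\}$. $F(L)$ is the quotient of $L\otimes L$ by the span of $a\otimes b-b\otimes a$ and $a\otimes[b,c]-[a,b]\otimes c$, regarded inside $A/\operatorname{span}\{ab-ba\}$ via $a\otimes b\mapsto\operatorname{tr}(ab)$. For $x_0\in\{x,y\}$, $\partial_{x_0}$ maps cyclic words by $\operatorname{tr}(a_1\cdots a_n)\mapsto\sum_{i:\,a_i=x_0}a_{i+1}\cdots a_n a_1\cdots a_{i-1}$. For $\Gamma\in F(L)$, $u_\Gamma$ is the derivation of $L$ with $u_\Gamma(x)=\partial_y\Gamma$, $u_\Gamma(y)=-\partial_x\Gamma$. For $l\in A$, $\partial^L_{x_0}(l)=\sum\partial^1\epsilon(\partial^2)$, where $\sum\partial^1\otimes\partial^2$ is the sum over occurrences of $x_0$ in monomials of (prefix)$\otimes$(suffix), and $\epsilon$ is the constant term. $\operatorname{div}(u)=\operatorname{tr}(\partial^L_x(u(x))+\partial^L_y(u(y)))$ for $u\in\operatorname{Der}(L)$. *)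

(* Defs.v *)
(* the free associative algebra A = R<x,y> is modelled by
   multinomials' monoid algebra {malg R[{fmonom bool}]} over the free monoid
   on the two letters (true = x, false = y), with R the real numbers
   (Stdlib's R, which is a MathComp realType via Rstruct). *)
From HB Require Import structures.
From mathcomp Require Import all_boot all_order all_algebra.
From mathcomp Require Import Rstruct.
From mathcomp.multinomials Require Import monalg.
From mathcomp Require Import finmap.
From Stdlib Require Import Rdefinitions.

Set Implicit Arguments.
Unset Strict Implicit.
Unset Printing Implicit Defensive.

Import GRing.Theory.
Local Open Scope ring_scope.

Definition letter := bool.
Definition lx : letter := true.
Definition ly : letter := false.

Definition A := {malg R[{fmonom letter}]}.

Definition mono (w : seq letter) : A := << FMonom w >>.

Definition X : A := mono [:: lx].
Definition Y : A := mono [:: ly].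

Definition linext (f : seq letter -> A) (a : A) : A :=
  \sum_(m <- msupp a) a@_m *: f (fmonom_val m).

(* the free Lie algebra L on x, y inside A: the smallest subspace of A
   containing x and y and closed under the commutator bracket *)
Definition bracket (a b : A) : A := a * b - b * a.

Inductive inL : A -> Prop :=
  | inL_x : inL X
  | inL_y : inL Y
  | inL_add a b : inL a -> inL b -> inL (a + b)
  | inL_scale (c : R) a : inL a -> inL (c *: a)
  | inL_bracket a b : inL a -> inL b -> inL (bracket a b).

(* span{ab - ba} and the trace map tr : A -> A/span{ab - ba};
   tr a = tr b  is expressed as  tr_eq a b *)
Definition inComm (a : A) : Prop :=
  exists s : seq (A * A), a = \sum_(p <- s) (p.1 * p.2 - p.2 * p.1).

Definition tr_eq (a b : A) : Prop := inComm (a - b).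

(* Gamma (given by a representative in A) lies in F(L):
   tr Gamma = tr (sum_i a_i b_i) with a_i, b_i in L *)
Definition inFL (G : A) : Prop :=
  exists s : seq (A * A),
    (forall p, p \in s -> inL p.1 /\ inL p.2) /\
    tr_eq G (\sum_(p <- s) p.1 * p.2).

(* cyclic derivative d_{x0}:
   tr(a_1...a_n) |-> sum_{i : a_i = x0} a_{i+1}...a_n a_1...a_{i-1} *)
Definition cycd_mono (x0 : letter) (w : seq letter) : A :=
  \sum_(i < size w | nth lx w i == x0) mono (drop i.+1 w ++ take i w).
Definition cycd (x0 : letter) : A -> A := linext (cycd_mono x0).

(* d^L_{x0}: sum over occurrences of x0 of prefix * eps(suffix) *)
Definition eps_mono (w : seq letter) : R := if w == [::] then 1 else 0.
Definition dL_mono (x0 : letter) (w : seq letter) : A :=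
  \sum_(i < size w | nth lx w i == x0) eps_mono (drop i.+1 w) *: mono (take i w).
Definition dL (x0 : letter) : A -> A := linext (dL_mono x0).

(* the derivation of A with x |-> fx, y |-> fy (restricting to the
   derivation of L when fx, fy are in L) *)
Definition der_mono (fx fy : A) (w : seq letter) : A :=
  \sum_(i < size w)
     mono (take i w) * (if nth lx w i == lx then fx else fy) * mono (drop i.+1 w).
Definition der (fx fy : A) : A -> A := linext (der_mono fx fy).

Definition uGamma (G : A) : A -> A := der (cycd ly G) (- cycd lx G).

(* div(u) = tr(d^L_x(u x) + d^L_y(u y)), given by a representative in A *)
Definition divA (u : A -> A) : A := dL lx (u X) + dL ly (u Y).

Definition star_mono (w : seq letter) : A := (-1) ^+ size w *: mono (rev w).
Definition star : A -> A := linext star_mono.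

(* Main.v *)
Require Import Defs.
From HB Require Import structures.
From mathcomp Require Import all_boot all_order all_algebra.
From mathcomp Require Import Rstruct.
From mathcomp.multinomials Require Import monalg.
From mathcomp Require Import finmap.
From Stdlib Require Import Rdefinitions.
Set Implicit Arguments.
Unset Strict Implicit.
Unset Printing Implicit Defensive.
Import GRing.Theory.
Local Open Scope ring_scope.

Definition lin (phi : A -> A) := forall (c : R) a b, phi (c *: a + b) = c *: phi a + phi b.

Section Lin.
Variable phi : A -> A.
Hypothesis H : lin phi.
Lemma lin0 : phi 0 = 0.
Proof. have := H 1 0 0. rewrite scale1r !addr0 scale1r => h. apply: (@addrI _ (phi 0)). by rewrite addr0 -h. Qed.
Lemma linD a b : phi (a + b) = phi a + phi b.
Proof. by have := H 1 a b; rewrite !scale1r. Qed.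
Lemma linZ c a : phi (c *: a) = c *: phi a.
Proof. by have := H c a 0; rewrite !addr0 lin0 addr0. Qed.
Lemma linN a : phi (- a) = - phi a.
Proof. by rewrite -scaleN1r linZ scaleN1r. Qed.
Lemma linB a b : phi (a - b) = phi a - phi b.
Proof. by rewrite linD linN. Qed.
Lemma lin_sum (I : Type) (s : seq I) (F : I -> A) :
  phi (\sum_(i <- s) F i) = \sum_(i <- s) phi (F i).
Proof. elim: s => [|i s IH]; first by rewrite !big_nil lin0.
by rewrite !big_cons linD IH. Qed.
End Lin.

Lemma lin_comp f g : lin f -> lin g -> lin (fun a => f (g a)).
Proof. by move=> Hf Hg c a b; rewrite Hg Hf. Qed.

Lemma lin_add f g : lin f -> lin g -> lin (fun a => f a + g a).
Proof. move=> Hf Hg c a b; rewrite Hf Hg scalerDr.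
by rewrite -!addrA; congr (_ + _); rewrite addrCA. Qed.

Lemma lin_opp f : lin f -> lin (fun a => - f a).
Proof. by move=> Hf c a b; rewrite Hf opprD scalerN. Qed.

Lemma lin_scale f (d : R) : lin f -> lin (fun a => d *: f a).
Proof. by move=> Hf c a b; rewrite Hf scalerDr !scalerA mulrC. Qed.

Lemma lin_zero : lin (fun _ => 0).
Proof. by move=> c a b; rewrite scaler0 addr0. Qed.

Lemma U_mono (k : {fmonom letter}) : << k >> = mono (fmonom_val k) :> A.
Proof. by rewrite /mono fmK. Qed.

Lemma UZ (c : R) (k : {fmonom letter}) : << c *g k >> = c *: (<< k >> : A).
Proof. apply/malgP => k'. by rewrite mcoeffZ !mcoeffU mulr_natr. Qed.

Lemma ext (f g : A -> A) : lin f -> lin g -> (forall w, f (mono w) = g (mono w)) ->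
  forall a, f a = g a.
Proof.
move=> Hf Hg Hw a. rewrite (monalgE a) (lin_sum Hf) (lin_sum Hg).
apply: eq_bigr => k _. by rewrite UZ (linZ Hf) (linZ Hg) U_mono Hw.
Qed.

Lemma linextEw (f : seq letter -> A) (a : A) (d : {fset {fmonom letter}}) :
  (msupp a `<=` d)%fset -> linext f a = \sum_(m <- d) a@_m *: f (fmonom_val m).
Proof.
move=> le; rewrite /linext [LHS](big_fset_incl _ le) => //= x xd /mcoeff_outdom ->.
by rewrite scale0r.
Qed.

Lemma lin_linext f : lin (linext f).
Proof.
move=> c a b.
rewrite (@linextEw f (c *: a + b) (msupp a `|` msupp b)%fset); last first.
  apply: fsubset_trans (msuppD_le _ _) _. apply: fsetSU. exact: msuppZ_le.
rewrite (@linextEw f a (msupp a `|` msupp b)%fset) ?fsubsetUl //.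
rewrite (@linextEw f b (msupp a `|` msupp b)%fset) ?fsubsetUr //.
rewrite scaler_sumr -big_split /=. apply: eq_bigr => m _.
by rewrite mcoeffD mcoeffZ scalerDl scalerA.
Qed.

Lemma linext_mono f w : linext f (mono w) = f w.
Proof.
rewrite (@linextEw f (mono w) [fset FMonom w]%fset) ?msuppU_le //.
by rewrite big_seq_fset1 /mono mcoeffUU scale1r.
Qed.

Lemma mono_mul u v : mono u * mono v = mono (u ++ v).
Proof.
rewrite /mono malgM_def fgmulUU mulr1. congr (<< _ >>).
by apply: val_inj; rewrite /= fmM.
Qed.

Lemma mono_nil : mono [::] = 1.
Proof. rewrite /mono. have -> : FMonom [::] = (mone : {fmonom letter}).
  by apply: val_inj; rewrite /= fm1.
by []. Qed.

Lemma monoC u (c : R) : mono u * (c%:MP : A) = c *: mono u.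
Proof.
rewrite /mono malgM_def fgmulUU mul1r UZ. congr (_ *: << _ >>).
by apply: val_inj; rewrite /= fmM fm1 cats0.
Qed.

Lemma lin_mulr b : lin (fun a => a * b).
Proof. by move=> c a1 a2; rewrite mulrDl scalerAl. Qed.

Lemma lin_scalar (c : R) : lin (fun a => c *: a).
Proof. by move=> d a1 a2; rewrite scalerDr !scalerA mulrC. Qed.

Lemma mulC (a : A) (c : R) : a * (c%:MP : A) = c *: a.
Proof.
apply: (@ext (fun a => a * (c%:MP : A)) (fun a => c *: a)) => //.
- exact: lin_mulr.
- exact: lin_scalar.
- by move=> w; rewrite monoC.
Qed.

Lemma scalerAr' (a : A) (c : R) (b : A) : a * (c *: b) = c *: (a * b).
Proof. by rewrite -mul_malgC mulrA mulC scalerAl. Qed.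

Lemma lin_mull b : lin (fun a => b * a).
Proof. by move=> c a1 a2; rewrite mulrDr scalerAr'. Qed.

Lemma lin_star : lin star.
Proof. exact: lin_linext. Qed.

Lemma star_monoE w : star (mono w) = (-1) ^+ size w *: mono (rev w).
Proof. by rewrite /star linext_mono. Qed.

Lemma star_mul a b : star (a * b) = star b * star a.
Proof.
move: a; apply: ext.
- exact: lin_comp lin_star (lin_mulr b).
- exact: lin_comp (lin_mull _) lin_star.
move=> u; move: b; apply: ext.
- exact: lin_comp lin_star (lin_mull _).
- exact: lin_comp (lin_mulr _) lin_star.
move=> v. rewrite mono_mul !star_monoE -scalerAl scalerAr' mono_mul scalerA.
by rewrite size_cat exprD mulrC rev_cat.
Qed.

Lemma star_X : star X = - X.
Proof. by rewrite /X star_monoE /= expr1 scaleN1r. Qed.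
Lemma star_Y : star Y = - Y.
Proof. by rewrite /Y star_monoE /= expr1 scaleN1r. Qed.

Lemma star_L a : inL a -> star a = - a.
Proof.
elim => {a} [| |a b _ Ha _ Hb|c a _ Ha|a b _ Ha _ Hb].
- exact: star_X.
- exact: star_Y.
- by rewrite (linD lin_star) Ha Hb opprD.
- by rewrite (linZ lin_star) Ha scalerN.
- rewrite /bracket (linB lin_star) !star_mul Ha Hb !mulrNN opprB //.
Qed.

Lemma inComm0 : inComm 0.
Proof. by exists [::]; rewrite big_nil. Qed.

Lemma inCommD a b : inComm a -> inComm b -> inComm (a + b).
Proof. by move=> [s ->] [t ->]; exists (s ++ t); rewrite big_cat. Qed.

Lemma inCommN a : inComm a -> inComm (- a).
Proof.
move=> [s ->]; exists [seq (p.2, p.1) | p <- s].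
rewrite big_map -sumrN; apply: eq_bigr => p _ /=. by rewrite opprB.
Qed.

Lemma inCommB a b : inComm a -> inComm b -> inComm (a - b).
Proof. by move=> ha hb; apply: inCommD ha (inCommN hb). Qed.

Lemma inComm_star a : inComm a -> inComm (star a).
Proof.
move=> [s ->]; exists [seq (star p.2, star p.1) | p <- s].
rewrite big_map (lin_sum lin_star); apply: eq_bigr => p _ /=.
by rewrite (linB lin_star) !star_mul.
Qed.

Lemma FL_star G : inFL G -> inComm (star G - G).
Proof.
move=> [s [Hs h]].
set S := \sum_(p <- s) p.1 * p.2.
have -> : star G - G = (star G - star S) + (star S - S) - (G - S).
  by rewrite addrA subrK opprB addrA subrK.
apply: inCommB; last exact: h.
apply: inCommD; first by rewrite -(linB lin_star); apply: inComm_star.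
exists [seq (p.2, p.1) | p <- s]; rewrite big_map /S (lin_sum lin_star) -sumrB.
rewrite big_seq [RHS]big_seq; apply: eq_bigr => p ps /=.
have [H1 H2] := Hs p ps.
by rewrite star_mul (star_L H1) (star_L H2) mulrNN.
Qed.

Definition Psi (x0 : letter) (v : seq letter) : A :=
  match v with a :: t => if a == x0 then mono t else 0 | [::] => 0 end.

Lemma cycd_mono_rot x0 w :
  cycd_mono x0 w = \sum_(0 <= i < size w) Psi x0 (rot i w).
Proof.
rewrite /cycd_mono big_mkcond /= big_mkord; apply: eq_bigr => i _.
by rewrite /rot (drop_nth lx (ltn_ord i)) /=.
Qed.

Lemma cyc_shift (g : nat -> A) n : g n = g 0%N ->
  \sum_(0 <= i < n) g i.+1 = \sum_(0 <= i < n) g i.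
Proof.
move=> h; apply: (@addIr _ (g n)); rewrite -big_nat_recr //=.
by rewrite big_nat_recl // h addrC.
Qed.

Definition rotsum (F : seq letter -> A) w := \sum_(0 <= i < size w) F (rot i w).

Lemma rotsum_rot1 F w : rotsum F (rot 1 w) = rotsum F w.
Proof.
rewrite /rotsum size_rot.
have -> : \sum_(0 <= i < size w) F (rot i (rot 1 w)) =
          \sum_(0 <= i < size w) F (rot i.+1 w).
  apply: eq_big_nat => i /andP [_ hi]; by rewrite -rotD ?addn1.
by rewrite (@cyc_shift (fun j => F (rot j w))) // rot_size rot0.
Qed.

Lemma rotsum_rot (F : seq letter -> A) (w : seq letter) (k : nat) : leq k (size w) -> rotsum F (rot k w) = rotsum F w.
Proof.
elim: k => [|k IH] hk; first by rewrite rot0.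
by rewrite -add1n rotD ?add1n // rotsum_rot1 IH // ltnW.
Qed.

Lemma rotsum_cat F u v : rotsum F (u ++ v) = rotsum F (v ++ u).
Proof.
by rewrite -rot_size_cat rotsum_rot // size_cat leq_addr.
Qed.

Lemma rotsum_rotr F w :
  \sum_(0 <= i < size w) F (rotr i w) = rotsum F w.
Proof.
rewrite /rotr big_nat_rev /= add0n.
have -> : \sum_(0 <= i < size w) F (rot (size w - (size w - i.+1)) w) =
          \sum_(0 <= i < size w) F (rot i.+1 w).
  apply: eq_big_nat => i /andP [_ hi]; by rewrite subKn.
by rewrite (@cyc_shift (fun j => F (rot j w))) // rot_size rot0.
Qed.

Lemma cycd_comm x0 (u v : A) : cycd x0 (u * v - v * u) = 0.
Proof.
move: u; apply: (@ext (fun u => cycd x0 (u * v - v * u)) (fun _ => 0)).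
- exact: (lin_comp (lin_linext _) (lin_add (lin_mulr v) (lin_opp (lin_mull v)))).
- exact: lin_zero.
move=> u; move: v; apply: (@ext (fun v => cycd x0 (mono u * v - v * mono u)) (fun _ => 0)).
- exact: (lin_comp (lin_linext _) (lin_add (lin_mull _) (lin_opp (lin_mulr _)))).
- exact: lin_zero.
move=> v; rewrite !mono_mul /cycd (linB (lin_linext _)) !linext_mono.
by rewrite !cycd_mono_rot -!/(rotsum _ _) rotsum_cat subrr.
Qed.

Lemma cycd_inComm x0 a : inComm a -> cycd x0 a = 0.
Proof.
move=> [s ->]; rewrite /cycd (lin_sum (lin_linext _)) big1 // => p _.
exact: cycd_comm.
Qed.

Lemma dL_mono_nil x0 : dL_mono x0 [::] = 0.
Proof. by rewrite /dL_mono big_ord0. Qed.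

Lemma dL_mono_rcons x0 t b :
  dL_mono x0 (rcons t b) = if b == x0 then mono t else 0.
Proof.
rewrite /dL_mono size_rcons big_mkcond big_ord_recr /=.
rewrite nth_rcons ltnn eqxx drop_oversize ?size_rcons //.
have -> : take (size t) (rcons t b) = t by rewrite -cats1 take_size_cat.
rewrite /eps_mono eqxx scale1r.
rewrite big1 ?add0r; first by case: (b == x0).
move=> i _.
have -> : (drop i.+1 (rcons t b) == [::]) = false.
  by rewrite -size_eq0 size_drop size_rcons subSS subn_eq0 leqNgt ltn_ord.
by rewrite scale0r; case: ifP.
Qed.

Lemma dL_mono_eq x1 t : dL x1 (mono t) = dL_mono x1 t.
Proof. by rewrite /dL linext_mono. Qed.

Lemma pointwise v :
  dL ly (Psi lx v) = (-1) ^+ size v *: star (dL lx (Psi ly (rev v))).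
Proof.
have d0 : forall x, dL x 0 = 0 by move=> x; exact: (lin0 (lin_linext _)).
have s0 : star 0 = 0 by exact: (lin0 lin_star).
case: v => [|a t]; first by rewrite /= !d0 s0 scaler0.
case/lastP: t => [|t b].
  by case: a; rewrite /= ?dL_mono_eq ?dL_mono_nil ?d0 ?s0 ?scaler0.
rewrite rev_cons rev_rcons /=.
case: a; case: b; rewrite /= ?dL_mono_eq ?dL_mono_rcons /= ?d0 ?s0 ?scaler0 //.
rewrite star_monoE revK scalerA size_rcons size_rev.
by rewrite -exprD -signr_odd addSn addSn /= negbK addnn odd_double expr0 scale1r.
Qed.

Lemma dLcycd x1 x0 w :
  dL x1 (cycd x0 (mono w)) = \sum_(0 <= i < size w) dL x1 (Psi x0 (rot i w)).
Proof. by rewrite /cycd linext_mono cycd_mono_rot /dL (lin_sum (lin_linext _)). Qed.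

Lemma main_ident a : dL ly (cycd lx a) = star (dL lx (cycd ly (star a))).
Proof.
move: a; apply: ext.
- exact: (lin_comp (lin_linext _) (lin_linext _)).
- exact: (lin_comp lin_star (lin_comp (lin_linext _) (lin_comp (lin_linext _) lin_star))).
move=> w; rewrite dLcycd star_monoE /cycd (linZ (lin_linext _)) /dL (linZ (lin_linext _)).
rewrite (linZ lin_star) -/(dL _ _) -/(cycd _ _) dLcycd (lin_sum lin_star) size_rev.
rewrite scaler_sumr.
pose F := fun v => (-1) ^+ size w *: star (dL lx (Psi ly (rev v))).
have -> : \sum_(0 <= i < size w) (-1) ^+ size w *: star (dL lx (Psi ly (rot i (rev w)))) =
   \sum_(0 <= i < size w) F (rotr i w).
  by apply: eq_bigr => i _; rewrite /F rev_rotr.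
rewrite (rotsum_rotr F) /rotsum /F; apply: eq_bigr => i _.
by rewrite -/(dL _ _) pointwise size_rot.
Qed.

Lemma der_X fx fy : der fx fy X = fx.
Proof.
rewrite /der /X linext_mono /der_mono.
rewrite (big_ord1 _ (fun i : 'I_1 => mono (take i [:: lx]) * (if nth lx [:: lx] i == lx then fx else fy) * mono (drop i.+1 [:: lx]))).
change (mono [::] * fx * mono [::] = fx).
by rewrite mono_nil mul1r mulr1.
Qed.

Lemma der_Y fx fy : der fx fy Y = fy.
Proof.
rewrite /der /Y linext_mono /der_mono.
rewrite (big_ord1 _ (fun i : 'I_1 => mono (take i [:: ly]) * (if nth lx [:: ly] i == lx then fx else fy) * mono (drop i.+1 [:: ly]))).
change (mono [::] * fy * mono [::] = fy).
by rewrite mono_nil mul1r mulr1.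
Qed.

Theorem mainTheorem15 (G : A) :
  inFL G ->
  tr_eq (divA (uGamma G)) (dL lx (cycd ly G) - star (dL lx (cycd ly G))).
Proof.
move=> hG.
have e : cycd ly (star G) = cycd ly G.
  apply/eqP; rewrite -subr_eq0 -(linB (lin_linext _)).
  by apply/eqP; apply: cycd_inComm; apply: FL_star.
have -> : divA (uGamma G) = dL lx (cycd ly G) - star (dL lx (cycd ly G)).
  rewrite /divA /uGamma der_X der_Y.
  have hN : dL ly (- cycd lx G) = - dL ly (cycd lx G) := linN (lin_linext _) _.
  rewrite hN.
  by rewrite main_ident e.
rewrite /tr_eq subrr; exact: inComm0.
Qed.
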